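(* Let $R$ be an associative ring with identity and involution $*$, and let $a\in R^{\#}\cap R^{\dagger}$. Let $\chi_a=\{a,\ a^{\#},\ a^{\dagger},\ a^*,\ (a^{\dagger})^*,\ (a^{\#})^*\}$. Then $a\in R^{SEP}$ if and only if $aa^*a^{\dagger}xx^{\dagger}a\in PE(R)$ for some $x\in\chi_a$.
   Context: An involution on $R$ is a map $x\mapsto x^*$ with $(x^* )^*=x$, $(x+y)^*=x^*+y^*$, $(xy)^*=y^*x^*$. An element $a$ is Moore–Penrose invertible if there is $b$ with $aba=a$, $bab=b$, $(ab)^*=ab$, $(ba)^*=ba$; such $b$ is unique, denoted $a^{\dagger}$, and $R^{\dagger}$ is the set of such $a$ (all elements of $\chi_a$ are Moore–Penrose invertible when $a\in R^{\#}\cap R^{\dagger}$). An element $a$ is group invertible if there is $b$ with $aba=a$, $bab=b$, $ab=ba$; such $b$ is unique, denoted $a^{\#}$, and $R^{\#}$ is the set of such $a$. $PE(R)=\{e\in R: e^2=e=e^*\}$ is the set of projections. For $a\in R^{\#}\cap R^{\dagger}$, $a$ is SEP if $a^*=a^{\dagger}=a^{\#}$; $R^{SEP}$ denotes the set of SEP elements. *)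

(* Defs.v *)
From mathcomp Require Import all_boot all_algebra.
Set Implicit Arguments. Unset Strict Implicit. Unset Printing Implicit Defensive.
Import GRing.Theory.
Local Open Scope ring_scope.

Definition is_involution (R : pzRingType) (star : R -> R) : Prop :=
  [/\ forall x, star (star x) = x,
      forall x y, star (x + y) = star x + star y
    & forall x y, star (x * y) = star y * star x].

Definition is_mp_inverse (R : pzRingType) (star : R -> R) (a b : R) : Prop :=
  [/\ a * b * a = a, b * a * b = b, star (a * b) = a * b & star (b * a) = b * a].

Definition is_group_inverse (R : pzRingType) (a b : R) : Prop :=
  [/\ a * b * a = a, b * a * b = b & a * b = b * a].

Definition is_projection (R : pzRingType) (star : R -> R) (e : R) : Prop :=
  e * e = e /\ star e = e.

(* a is SEP: a \in R^# \cap R^dagger and a^* = a^dagger = a^#,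
   i.e. a^* is both the Moore-Penrose inverse and the group inverse of a. *)
Definition is_SEP (R : pzRingType) (star : R -> R) (a : R) : Prop :=
  is_mp_inverse star a (star a) /\ is_group_inverse a (star a).

Definition chi (R : pzRingType) (star : R -> R) (a ag ad : R) : seq R :=
  [:: a; ag; ad; star a; star ad; star ag].

(* Main.v *)
Require Import Defs.
From mathcomp Require Import all_boot all_algebra.
Set Implicit Arguments. Unset Strict Implicit.
Import GRing.Theory.
Local Open Scope ring_scope.

Lemma mp_unique (R : pzRingType) (star : R -> R) a b c :
  is_involution star -> is_mp_inverse star a b -> is_mp_inverse star a c -> b = c.
Proof.
move=> [sK sD sM] [b1 b2 b3 b4] [c1 c2 c3 c4].
have sa : star a = star a * (a * c) by rewrite -[in LHS]c1 sM c3.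
have sa' : star a = c * a * star a by rewrite -[in LHS]c1 -mulrA sM c4.
have ab : a * b = a * c.
  by rewrite -b3 sM sa mulrA -sM b3 mulrA b1.
have ba : b * a = c * a.
  by rewrite -b4 sM sa' -mulrA -sM b4 -(mulrA c) [a * (b * a)]mulrA b1.
by rewrite -[LHS]b2 -mulrA ab mulrA ba c2.
Qed.

Lemma proj_eq (R : pzRingType) (star : R -> R) x xd P s :
  is_involution star -> P * P = P -> star P = P -> is_mp_inverse star x xd ->
  P * x = x -> P = x * s -> x * xd = P.
Proof.
move=> [sK sD sM] PP sP [h1 h2 h3 h4] Px Pe.
have e1 : P * (x * xd) = x * xd by rewrite mulrA Px.
have e2 : (x * xd) * (x * s) = x * s by rewrite mulrA h1.
rewrite -Pe in e2.
by rewrite -h3 -e1 sM h3 sP e2.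
Qed.

Lemma EP_of (R : pzRingType) (star : R -> R) a ag ad :
  is_involution star -> is_group_inverse a ag -> is_mp_inverse star a ad ->
  a * a * ad = a -> ag = ad.
Proof.
move=> inv [g1 g2 g3] [m1 m2 m3 m4] h.
have e : a * ag = a * ad.
  by rewrite g3 -{1}h !mulrA -g3 g1.
apply: (mp_unique inv _ (And4 m1 m2 m3 m4)).
split => //; first by rewrite e.
by rewrite -g3 e.
Qed.

Lemma fin_SEP (R : pzRingType) (star : R -> R) a ad :
  is_involution star -> is_group_inverse a ad -> is_mp_inverse star a ad ->
  (a * star a) * (a * star a) = a * star a -> is_SEP star a.
Proof.
move=> [sK sD sM] G [m1 m2 m3 m4] E.
have F2 : ad * a * star a = star a by rewrite -[in RHS]m1 -[in RHS]mulrA [in RHS]sM m4.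
have F1 : star a * (a * ad) = star a by rewrite -m3 -sM m1.
have F3 : star a * star ad = ad * a by rewrite -sM m4.
have H : ad * (a * star a) * (a * star a) * star ad = ad * (a * star a) * star ad.
  by rewrite -(mulrA ad) E.
rewrite !mulrA F2 -!mulrA F3 in H.
(* H : star a * a * ad * a = ad * a *)
rewrite [a * (ad * a)]mulrA m1 in H.
have sa : star a = ad by rewrite -F1 mulrA H m2.
by rewrite /is_SEP sa.
Qed.

Ltac ctx H := let z := fresh "z" in move=> z; move: (congr1 (fun t => z * t) H) => /=; rewrite !mulrA; exact id.

Lemma core (R : pzRingType) (star : R -> R) a ag ad X :
  is_involution star -> is_group_inverse a ag -> is_mp_inverse star a ad ->
  (X = a * ad \/ X = ad * a) ->
  is_projection star (a * star a * ad * X * a) -> is_SEP star a.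
Proof.
move=> inv G M hX [Pi Ps].
have [sK sD sM] := inv.
have [g1 g2 g3] := G. have [m1 m2 m3 m4] := M.
have F2 : ad * a * star a = star a by rewrite -[in RHS]m1 -[in RHS]mulrA [in RHS]sM m4.
have F1 : star a * a * ad = star a by rewrite -mulrA -m3 -sM m1.
have Ya : star ad * ad * a * star a = a * ad.
  by rewrite -!mulrA [ad * (a * _)]mulrA F2 -sM m3.
have agE : a * ag * ag = ag by rewrite g3 g2.
have pag : a * ad * ag = ag by rewrite -[in LHS]agE !mulrA m1 agE.
have Zp : a * star a * star ag * a * ad = a * star a * star ag.
  have sagp : star ag * (a * ad) = star ag by rewrite -m3 -sM pag.
  by rewrite -(mulrA _ a) -(mulrA (a * star a)) sagp.
have adE : star a * star ad * ad = ad by rewrite -sM m4 m2.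
have Zad : a * star a * star ag * ad = a * ad.
  have sas : star a * star ag * star a = star a by rewrite -sM -sM mulrA g1.
  have sasz : forall z, z * star a * star ag * star a = z * star a by ctx sas.
  rewrite -[in LHS]adE !mulrA sasz -(mulrA a (star a)) -sM m4 mulrA m1.
  done.
have m1z : forall z, z * a * ad * a = z * a by ctx m1.
have m2z : forall z, z * ad * a * ad = z * ad by ctx m2.
have Yaz : forall z, z * star ad * ad * a * star a = z * a * ad by ctx Ya.
have Zpz : forall z, z * a * star a * star ag * a * ad = z * a * star a * star ag by ctx Zp.
have Zadz : forall z, z * a * star a * star ag * ad = z * a * ad by ctx Zad.
have F1z : forall z, z * star a * a * ad = z * star a by ctx F1.
set e := a * star a * ad * X * a in Pi Ps.
have pe : a * ad * e = e by rewrite /e !mulrA m1.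
have ep : e * (a * ad) = e by rewrite -[in LHS]Ps -m3 -sM pe Ps.
have aaad : a * a * ad = a.
  case: hX => hX; rewrite /e hX in ep.
    move: (congr1 (fun t => a * star a * star ag * (star ad * ad) * t) ep) => /=.
    by rewrite !mulrA !m2z !Yaz !Zp !Zad !m1.
  move: (congr1 (fun t => a * star a * star ag * (a * star a * star ag) * (star ad * ad) * t) ep) => /=.
  rewrite !mulrA !Yaz !Zpz !Zadz !Zp !Zad !m1 => h.
  have gaa : ag * a * a = a by rewrite -g3 g1.
  by move: (congr1 (fun t => ag * t) h) => /=; rewrite !mulrA !gaa.
have agad := EP_of inv G M aaad. subst ag.
have g3z : forall z, z * a * ad = z * ad * a by ctx g3.
have gaa : ad * a * a = a by rewrite -g3 g1.
have gaaz : forall z, z * ad * a * a = z * a by ctx gaa.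
have ee : e = a * star a.
  rewrite /e; case: hX => ->; rewrite !mulrA ?m2z ?gaaz -g3z F1z //.
rewrite ee in Pi.
exact: fin_SEP inv G M Pi.
Qed.

Theorem corollary2p4 (R : pzRingType) (star : R -> R) (a ag ad : R) :
  is_involution star ->
  is_group_inverse a ag ->
  is_mp_inverse star a ad ->
  (is_SEP star a <->
   exists x xd : R,
     [/\ x \in chi star a ag ad,
         is_mp_inverse star x xd
       & is_projection star (a * star a * ad * x * xd * a)]).
Proof.
move=> inv G M.
have [sK sD sM] := inv.
have [g1 g2 g3] := G. have [m1 m2 m3 m4] := M.
have m1z : forall z, z * a * ad * a = z * a by ctx m1.
have m2z : forall z, z * ad * a * ad = z * ad by ctx m2.
split.
  move=> [Ms [s1 s2 s3]].
  have sa : star a = ad := mp_unique inv Ms M.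
  rewrite sa in s3.
  exists a, ad; split => //; first by rewrite !inE eqxx.
  have -> : a * star a * ad * a * ad * a = a * ad.
    by rewrite sa m2z -(mulrA (a * ad) ad a) -s3 mulrA m1.
  by split; [rewrite mulrA m1 | exact: m3].
move=> [x [xd [xin Mx Pr]]].
rewrite -(mulrA _ x xd) in Pr.
have pp : a * ad * (a * ad) = a * ad by rewrite mulrA m1.
have qq : ad * a * (ad * a) = ad * a by rewrite mulrA m2.
have gaa : ag * a * a = a by rewrite -g3 g1.
move: xin; rewrite !inE => /or4P [/eqP xE|/eqP xE|/eqP xE|/or3P [/eqP xE|/eqP xE|/eqP xE]];
  subst x.
- have E : a * xd = a * ad := proj_eq (s := ad) inv pp m3 Mx m1 erefl.
  by apply: (core inv G M (or_introl erefl)); rewrite -E.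
- have Px : a * ad * ag = ag.
    have agE : a * ag * ag = ag by rewrite g3 g2.
    by rewrite -[in LHS]agE !mulrA m1 agE.
  have E : ag * xd = a * ad.
    by apply: (proj_eq (s := a * a * ad) inv pp m3 Mx Px); rewrite !mulrA gaa.
  by apply: (core inv G M (or_introl erefl)); rewrite -E.
- have E : ad * xd = ad * a := proj_eq (s := a) inv qq m4 Mx m2 erefl.
  by apply: (core inv G M (or_intror erefl)); rewrite -E.
- have Px : ad * a * star a = star a by rewrite -[in RHS]m1 -[in RHS]mulrA [in RHS]sM m4.
  have E : star a * xd = ad * a.
    by apply: (proj_eq (s := star ad) inv qq m4 Mx Px); rewrite -sM m4.
  by apply: (core inv G M (or_intror erefl)); rewrite -E.
- have Px : a * ad * star ad = star ad by rewrite -m3 -sM mulrA m2.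
  have E : star ad * xd = a * ad.
    by apply: (proj_eq (s := star a) inv pp m3 Mx Px); rewrite -sM m3.
  by apply: (core inv G M (or_introl erefl)); rewrite -E.
- have agE : ag * ag * a = ag by rewrite -mulrA -g3 mulrA g2.
  have Px : ad * a * star ag = star ag.
    by rewrite -m4 -sM -[in LHS]agE !mulrA m1z agE.
  have aaag : a * a * ag = a by rewrite -mulrA g3 mulrA g1.
  have E : star ag * xd = ad * a.
    apply: (proj_eq (s := star (ad * a * a)) inv qq m4 Mx Px).
    by rewrite -sM -!mulrA [a * (a * ag)]mulrA aaag m4.
  by apply: (core inv G M (or_intror erefl)); rewrite -E.
Qed.
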